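(* Let $\alpha=\frac{1+\sqrt5}{2}$. For $a\in\mathbb{C}$ with $a\neq 0$ and $|a|<1$, consider the Blaschke product $B_a(z)=z\,\frac{z-a}{1-\overline{a}z}$. There are infinitely many values of $a$ (with $a\neq0$, $|a|<1$) such that there exists a line segment $[z_1,z_2]$ with endpoints $z_1,z_2$ on the unit circle $\partial\mathbb{D}$ which is divided by $a$ in the golden ratio. Furthermore, for a fixed such $a$, the number of line segments with endpoints on the unit circle that are divided by $a$ in the golden ratio is at most two.
   Context: $\mathbb{D}$ denotes the open unit disc and $\partial\mathbb{D}$ the unit circle. The golden ratio is $\alpha=\frac{1+\sqrt5}{2}$, the positive root of $x^2-x-1=0$. A point $a$ on a line segment $[z_1,z_2]$ divides it in the golden ratio if the ratio of the length of the longer part to the length of the shorter part equals $\alpha$, e.g. $\frac{|z_2-a|}{|z_1-a|}=\alpha$. (For any chord $[z_1,z_2]$ of the unit circle through the nonzero zero $a$ of $B_a$ one has $B_a(z_1)=B_a(z_2)$.) *)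

(* Defs.v *)
From Stdlib Require Import Reals Lra.
From Coquelicot Require Import Coquelicot.
Open Scope R_scope.

Definition golden : R := (1 + sqrt 5) / 2.

Definition on_unit_circle (z : C) : Prop := Cmod z = 1.

Definition on_segment (a z1 z2 : C) : Prop :=
  exists t : R, 0 <= t <= 1 /\ a = Cplus z1 (Cmult (RtoC t) (Cminus z2 z1)).

Definition divides_golden (a z1 z2 : C) : Prop :=
  on_segment a z1 z2 /\
  (Cmod (Cminus z2 a) / Cmod (Cminus z1 a) = golden \/
   Cmod (Cminus z1 a) / Cmod (Cminus z2 a) = golden).

Definition golden_chord (a z1 z2 : C) : Prop :=
  on_unit_circle z1 /\ on_unit_circle z2 /\ divides_golden a z1 z2.

Definition same_segment (z1 z2 w1 w2 : C) : Prop :=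
  (z1 = w1 /\ z2 = w2) \/ (z1 = w2 /\ z2 = w1).

(* The Blaschke product B_a(z) = z (z - a) / (1 - conj(a) z) (context only). *)
Definition blaschke (a z : C) : C :=
  Cmult z (Cdiv (Cminus z a) (Cminus (RtoC 1) (Cmult (Cconj a) z))).

Definition admissible (a : C) : Prop := a <> RtoC 0 /\ Cmod a < 1.

(* Main.v *)
Require Import Defs.
From Stdlib Require Import Reals List.
From Coquelicot Require Import Coquelicot.
From Stdlib Require Import Lra Psatz.
Open Scope R_scope.
Ltac sos2 := apply Rplus_le_le_0_compat; apply pow2_ge_0.

Lemma Keq (a1 a2 s x y u v : R) :
  x^2+y^2=1 -> u^2+v^2=1 -> a1 = (1-s)*x + s*u -> a2 = (1-s)*y + s*v ->
  2*(1-s)*(a1*x+a2*y) = a1^2+a2^2+(1-s)^2-s^2.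
Proof. intros H1 H2 -> ->.
  assert (E: 2*(1-s)*(((1-s)*x+s*u)*x+((1-s)*y+s*v)*y) - (((1-s)*x+s*u)^2+((1-s)*y+s*v)^2+(1-s)^2-s^2)
     = (1-s)^2*(x^2+y^2-1) - s^2*(u^2+v^2-1)) by ring.
  rewrite H1, H2 in E. lra. Qed.

Lemma sq_eq (x y : R) : x^2 = y^2 -> x = y \/ x = -y.
Proof. intros H. assert ((x-y)*(x+y)=0) by nra.
  apply Rmult_integral in H0; lra. Qed.

Lemma pair_eq (a1 a2 s x1 y1 u1 v1 x2 y2 u2 v2 : R) :
  0 < a1^2+a2^2 -> 0 < s < 1 ->
  x1^2+y1^2=1 -> u1^2+v1^2=1 -> a1 = (1-s)*x1 + s*u1 -> a2 = (1-s)*y1 + s*v1 ->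
  x2^2+y2^2=1 -> u2^2+v2^2=1 -> a1 = (1-s)*x2 + s*u2 -> a2 = (1-s)*y2 + s*v2 ->
  -a2*x1+a1*y1 = -a2*x2+a1*y2 ->
  x1 = x2 /\ y1 = y2 /\ u1 = u2 /\ v1 = v2.
Proof.
  intros HN Hs A1 B1 C1 D1 A2 B2 C2 D2 W.
  pose proof (Keq _ _ _ _ _ _ _ A1 B1 C1 D1) as K1.
  pose proof (Keq _ _ _ _ _ _ _ A2 B2 C2 D2) as K2.
  assert (K : a1*x1+a2*y1 = a1*x2+a2*y2).
  { apply Rmult_eq_reg_l with (2*(1-s)); [lra|lra]. }
  assert (X : (a1^2+a2^2)*x1 = (a1^2+a2^2)*x2).
  { replace ((a1^2+a2^2)*x1) with (a1*(a1*x1+a2*y1) - a2*(-a2*x1+a1*y1)) by ring.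
    replace ((a1^2+a2^2)*x2) with (a1*(a1*x2+a2*y2) - a2*(-a2*x2+a1*y2)) by ring.
    rewrite K, W. reflexivity. }
  assert (Y : (a1^2+a2^2)*y1 = (a1^2+a2^2)*y2).
  { replace ((a1^2+a2^2)*y1) with (a2*(a1*x1+a2*y1) + a1*(-a2*x1+a1*y1)) by ring.
    replace ((a1^2+a2^2)*y2) with (a2*(a1*x2+a2*y2) + a1*(-a2*x2+a1*y2)) by ring.
    rewrite K, W. reflexivity. }
  apply Rmult_eq_reg_l in X; [|lra].
  apply Rmult_eq_reg_l in Y; [|lra].
  subst x2 y2.
  split; [lra|split;[lra|]].
  split; apply Rmult_eq_reg_l with s; lra.
Qed.

Lemma w_sq (a1 a2 s x1 y1 u1 v1 x2 y2 u2 v2 : R) :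
  0 < s < 1 ->
  x1^2+y1^2=1 -> u1^2+v1^2=1 -> a1 = (1-s)*x1 + s*u1 -> a2 = (1-s)*y1 + s*v1 ->
  x2^2+y2^2=1 -> u2^2+v2^2=1 -> a1 = (1-s)*x2 + s*u2 -> a2 = (1-s)*y2 + s*v2 ->
  (-a2*x1+a1*y1)^2 = (-a2*x2+a1*y2)^2.
Proof.
  intros Hs A1 B1 C1 D1 A2 B2 C2 D2.
  pose proof (Keq _ _ _ _ _ _ _ A1 B1 C1 D1) as K1.
  pose proof (Keq _ _ _ _ _ _ _ A2 B2 C2 D2) as K2.
  assert (K : a1*x1+a2*y1 = a1*x2+a2*y2).
  { apply Rmult_eq_reg_l with (2*(1-s)); [lra|lra]. }
  assert (L1 : (a1*x1+a2*y1)^2 + (-a2*x1+a1*y1)^2 = (a1^2+a2^2)*(x1^2+y1^2)) by ring.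
  assert (L2 : (a1*x2+a2*y2)^2 + (-a2*x2+a1*y2)^2 = (a1^2+a2^2)*(x2^2+y2^2)) by ring.
  rewrite A1 in L1. rewrite A2 in L2. rewrite K in L1. lra.
Qed.

Lemma golden_pos : 1 < golden.
Proof.
  unfold golden. assert (1 < sqrt 5).
  { rewrite <- sqrt_1. apply sqrt_lt_1_alt. lra. }
  lra.
Qed.

Definition sg : R := 1 / (1 + golden).

Lemma sg_range : 0 < sg < 1.
Proof.
  pose proof golden_pos. unfold sg. split.
  - apply Rdiv_lt_0_compat; lra.
  - apply (Rmult_lt_reg_r (1+golden)); [lra|]. field_simplify; lra.
Qed.

Lemma sqrt_eq1 x : 0 <= x -> sqrt x = 1 -> x = 1.
Proof. intros H E. rewrite <- (sqrt_sqrt x H), E. ring. Qed.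

Lemma sqrt_lt1 x : 0 <= x -> sqrt x < 1 -> x < 1.
Proof.
  intros H E. destruct (Rlt_le_dec x 1) as [h|h]; auto.
  apply sqrt_le_1_alt in h. rewrite sqrt_1 in h. lra.
Qed.

Lemma sqrt_scale k D E : 0 <= k -> 0 <= D -> E = k^2*D -> sqrt E = k * sqrt D.
Proof.
  intros Hk HD ->. rewrite sqrt_mult_alt.
  - rewrite sqrt_pow2; auto.
  - apply pow_le; auto.
Qed.

Lemma norm_real (a1 a2 x1 y1 x2 y2 t: R) :
  a1^2+a2^2 < 1 -> x1^2+y1^2=1 -> x2^2+y2^2=1 -> 0<=t<=1 ->
  a1 = x1 + t*(x2-x1) -> a2 = y1 + t*(y2-y1) ->
  (sqrt((x2-a1)^2+(y2-a2)^2) / sqrt((x1-a1)^2+(y1-a2)^2) = golden \/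
   sqrt((x1-a1)^2+(y1-a2)^2) / sqrt((x2-a1)^2+(y2-a2)^2) = golden) ->
  t = sg \/ t = 1 - sg.
Proof.
  intros Ha H1 H2 Ht E1 E2 Hr.
  pose proof golden_pos as Hg.
  set (D := (x2-x1)^2+(y2-y1)^2).
  assert (HD : 0 <= D) by (unfold D; sos2).
  assert (M2 : sqrt((x2-a1)^2+(y2-a2)^2) = (1-t)*sqrt D).
  { apply sqrt_scale; [lra|auto|]. subst a1 a2; unfold D; ring. }
  assert (M1 : sqrt((x1-a1)^2+(y1-a2)^2) = t*sqrt D).
  { apply sqrt_scale; [lra|auto|]. subst a1 a2; unfold D; ring. }
  rewrite M1, M2 in Hr.
  assert (t0 : t <> 0).
  { intro h. subst t. assert (a1 = x1) by lra. assert (a2 = y1) by lra. subst. lra. }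
  assert (t1 : t <> 1).
  { intro h. subst t. assert (a1 = x2) by lra. assert (a2 = y2) by lra. subst. lra. }
  destruct (Req_dec (sqrt D) 0) as [Z|Z].
  { rewrite Z in Hr. rewrite !Rmult_0_r in Hr. unfold Rdiv in Hr.
    rewrite Rmult_0_l in Hr. lra. }
  unfold sg.
  destruct Hr as [Hr|Hr].
  - assert (e : (1-t) = golden * t).
    { rewrite <- Hr. field. auto. }
    left. replace t with ((t*(1+golden))/(1+golden)) by (field; lra).
    replace (t*(1+golden)) with 1 by lra. reflexivity.
  - assert (e : t = golden * (1-t)).
    { rewrite <- Hr. field. split; auto. lra. }
    right. assert (h : 1 - t = 1/(1+golden)).
    { replace (1-t) with (((1-t)*(1+golden))/(1+golden)) by (field; lra).
      replace ((1-t)*(1+golden)) with 1 by lra. reflexivity. }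
    lra.
Qed.

Lemma normalize a z1 z2 : admissible a -> golden_chord a z1 z2 ->
  exists p q : C, same_segment z1 z2 p q /\
    fst p ^2 + snd p ^2 = 1 /\ fst q ^2 + snd q ^2 = 1 /\
    fst a = (1-sg)*fst p + sg * fst q /\ snd a = (1-sg)*snd p + sg * snd q.
Proof.
  intros [Ha0 Ha1] [H1 [H2 [[t [Ht Hseg]] Hr]]].
  destruct a as [a1 a2], z1 as [x1 y1], z2 as [x2 y2].
  assert (C2 : forall u v w z : R, Cmod (Cminus (u,v) (w,z)) = sqrt((u-w)^2+(v-z)^2)).
  { intros. unfold Cmod, Cminus, Cplus, Copp. cbn [fst snd]. f_equal; ring. }
  rewrite !C2 in Hr.
  unfold on_unit_circle, Cmod in H1, H2, Ha1. cbn [fst snd] in H1, H2, Ha1.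
  apply sqrt_eq1 in H1; [|sos2]. apply sqrt_eq1 in H2; [|sos2].
  apply sqrt_lt1 in Ha1; [|sos2].
  unfold Cplus, Cmult, Cminus, Copp, RtoC in Hseg. cbn [fst snd] in Hseg.
  injection Hseg as E1 E2.
  assert (E1' : a1 = x1 + t*(x2-x1)) by lra.
  assert (E2' : a2 = y1 + t*(y2-y1)) by lra.
  destruct (norm_real a1 a2 x1 y1 x2 y2 t Ha1 H1 H2 Ht E1' E2' Hr) as [T|T].
  - exists (x1,y1), (x2,y2). cbn [fst snd]. unfold same_segment.
    split; [left; split; reflexivity|]. repeat split; auto; subst t; lra.
  - exists (x2,y2), (x1,y1). cbn [fst snd]. unfold same_segment.
    split; [right; split; reflexivity|]. repeat split; auto; subst t; lra.
Qed.

Lemma same_trans z1 z2 w1 w2 p q :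
  same_segment z1 z2 p q -> same_segment w1 w2 p q -> same_segment z1 z2 w1 w2.
Proof.
  unfold same_segment. intros [[-> ->]|[-> ->]] [[-> ->]|[-> ->]]; tauto.
Qed.

Lemma part2 : forall a : C, admissible a ->
     forall z1 z2 w1 w2 v1 v2 : C,
       golden_chord a z1 z2 -> golden_chord a w1 w2 -> golden_chord a v1 v2 ->
       same_segment z1 z2 w1 w2 \/ same_segment z1 z2 v1 v2 \/
       same_segment w1 w2 v1 v2.
Proof.
  intros a Ha z1 z2 w1 w2 v1 v2 G1 G2 G3.
  destruct (normalize _ _ _ Ha G1) as [p1 [q1 [S1 [A1 [B1 [C1 D1]]]]]].
  destruct (normalize _ _ _ Ha G2) as [p2 [q2 [S2 [A2 [B2 [C2 D2]]]]]].
  destruct (normalize _ _ _ Ha G3) as [p3 [q3 [S3 [A3 [B3 [C3 D3]]]]]].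
  pose proof sg_range as Hs.
  destruct Ha as [Ha0 _].
  destruct a as [a1 a2], p1 as [x1 y1], q1 as [u1 v1'], p2 as [x2 y2], q2 as [u2 v2'],
    p3 as [x3 y3], q3 as [u3 v3']. cbn [fst snd] in *.
  assert (HN : 0 < a1^2+a2^2).
  { destruct (Req_dec a1 0) as [e1|e1]; [destruct (Req_dec a2 0) as [e2|e2]|].
    - exfalso; apply Ha0; unfold RtoC; rewrite e1, e2; reflexivity.
    - assert (0 < a2^2) by (apply pow2_gt_0; auto). nra.
    - assert (0 < a1^2) by (apply pow2_gt_0; auto). nra. }
  pose proof (w_sq _ _ _ _ _ _ _ _ _ _ _ Hs A1 B1 C1 D1 A2 B2 C2 D2) as W12.
  pose proof (w_sq _ _ _ _ _ _ _ _ _ _ _ Hs A1 B1 C1 D1 A3 B3 C3 D3) as W13.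
  apply sq_eq in W12. apply sq_eq in W13.
  destruct W12 as [W12|W12].
  - left. destruct (pair_eq _ _ _ _ _ _ _ _ _ _ _ HN Hs A1 B1 C1 D1 A2 B2 C2 D2 W12)
      as [-> [-> [-> ->]]].
    eapply same_trans; eauto.
  - destruct W13 as [W13|W13].
    + right; left. destruct (pair_eq _ _ _ _ _ _ _ _ _ _ _ HN Hs A1 B1 C1 D1 A3 B3 C3 D3 W13)
      as [-> [-> [-> ->]]].
      eapply same_trans; eauto.
    + right; right. assert (W : -a2*x2+a1*y2 = -a2*x3+a1*y3) by lra.
      destruct (pair_eq _ _ _ _ _ _ _ _ _ _ _ HN Hs A2 B2 C2 D2 A3 B3 C3 D3 W)
      as [-> [-> [-> ->]]].
      eapply same_trans; eauto.
Qed.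

Lemma avoid (l : list C) : forall lo hi, lo < hi ->
  exists y, lo < y < hi /\ forall b, In b l -> snd b <> y.
Proof.
  induction l as [|b l IH]; intros lo hi H.
  - exists ((lo+hi)/2). split; [lra|]. intros b [].
  - destruct (Rlt_dec lo (snd b)) as [h|h].
    + destruct (IH lo (Rmin hi (snd b))) as [y [Hy Hn]].
      { apply Rmin_glb_lt; lra. }
      exists y. pose proof (Rmin_l hi (snd b)). pose proof (Rmin_r hi (snd b)).
      split; [lra|]. intros c [<-|Hc]; [lra|auto].
    + destruct (IH lo hi H) as [y [Hy Hn]].
      exists y. split; [lra|]. intros c [<-|Hc]; [lra|auto].
Qed.

Lemma construct y : 0 < y < 1 ->
  admissible ((sqrt 5 - 2) * sqrt (1 - y^2), y) /\
  exists z1 z2 : C, golden_chord ((sqrt 5 - 2) * sqrt (1 - y^2), y) z1 z2.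
Proof.
  intros Hy.
  set (r := sqrt 5).
  assert (r5 : r * r = 5) by (apply sqrt_sqrt; lra).
  assert (r2 : 2 < r).
  { unfold r. replace 2 with (sqrt 4). apply sqrt_lt_1_alt; lra.
    replace 4 with (2*2) by ring. apply sqrt_square; lra. }
  assert (r3 : r < 3).
  { unfold r. replace 3 with (sqrt 9). apply sqrt_lt_1_alt; lra.
    replace 9 with (3*3) by ring. apply sqrt_square; lra. }
  set (c := r - 2).
  set (sv := sqrt (1 - y^2)).
  assert (sv2 : sv * sv = 1 - y^2) by (apply sqrt_sqrt; nra).
  assert (svp : 0 < sv) by (apply sqrt_lt_R0; nra).
  split.
    - split.
      + intro E. injection E as _ E. lra.
      + unfold Cmod; cbn [fst snd]. rewrite <- sqrt_1. apply sqrt_lt_1_alt.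
        split; [sos2|]. assert (0 < c < 1) by (unfold c; lra).
        assert (c*c < 1) by nra.
        replace ((c*sv)^2) with ((c*c)*(sv*sv)) by ring. rewrite sv2.
        assert (0 < 1 - y^2) by nra.
        assert (0 < (1 - c*c)*(1-y^2)) by (apply Rmult_lt_0_compat; lra).
        lra.
    - exists (-sv, y), (sv, y). split; [|split].
      + unfold on_unit_circle, Cmod; cbn [fst snd]. rewrite <- sqrt_1. f_equal. nra.
      + unfold on_unit_circle, Cmod; cbn [fst snd]. rewrite <- sqrt_1. f_equal. nra.
      + split.
        * exists ((c+1)/2). split; [unfold c; lra|].
          unfold Cminus, Copp, Cplus, Cmult, RtoC; cbn [fst snd].
          f_equal; field.
        * right. unfold Cmod, Cminus, Copp, Cplus; cbn [fst snd].
          assert (M1 : sqrt ((- sv + - (c * sv)) ^ 2 + (y + - y) ^ 2) = (1+c)*sqrt(sv*sv)).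
          { apply sqrt_scale; [unfold c; lra | nra | ring]. }
          assert (M2 : sqrt ((sv + - (c * sv)) ^ 2 + (y + - y) ^ 2) = (1-c)*sqrt(sv*sv)).
          { apply sqrt_scale; [unfold c; lra | nra | ring]. }
          rewrite M1, M2.
          rewrite sqrt_square; [|lra].
          assert (e : 1 + c = golden * (1 - c)).
          { unfold golden, c. fold r. nra. }
          rewrite e. field. unfold c; lra.
Qed.

Lemma part1 : ~ exists l : list C, forall a : C,
        admissible a -> (exists z1 z2 : C, golden_chord a z1 z2) -> In a l.
Proof.
  intros [l Hl].
  destruct (avoid l 0 1 ltac:(lra)) as [y [Hy Hn]].
  destruct (construct y Hy) as [Hin1 Hin2].
  apply (Hn _ (Hl _ Hin1 Hin2)). reflexivity.
Qed.

Theorem theorem1 :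
  (* infinitely many admissible a admit a golden chord *)
  (~ exists l : list C, forall a : C,
        admissible a -> (exists z1 z2 : C, golden_chord a z1 z2) -> In a l)
  /\
  (* for each admissible a, at most two golden chords *)
  (forall a : C, admissible a ->
     forall z1 z2 w1 w2 v1 v2 : C,
       golden_chord a z1 z2 -> golden_chord a w1 w2 -> golden_chord a v1 v2 ->
       same_segment z1 z2 w1 w2 \/ same_segment z1 z2 v1 v2 \/
       same_segment w1 w2 v1 v2).
Proof. split; [exact part1 | exact part2]. Qed.
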